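(* Let $\Lambda$ be a finite-dimensional algebra over a field $k$. Then: (1) $K({\bf T}(\Lambda))=K(\Lambda) \ltimes [\Lambda,\Lambda^*]$, i.e. $K({\bf T}(\Lambda))=\{(a,\varphi): a\in K(\Lambda),\ \varphi\in[\Lambda,\Lambda^*]\}$. (2) Assume moreover that $\Lambda$ is symmetric with symmetrizing (associative, symmetric, nondegenerate bilinear) form $\langle-,-\rangle$. Then (a) $[\Lambda,\Lambda^*]$ is spanned by the linear maps $\varphi_{[a,b]}:=\langle -,ab-ba\rangle$, $a,b\in\Lambda$; (b) $[\Lambda,\Lambda^*] = \operatorname{Ann}_{\Lambda^*}(Z(\Lambda))$.
   Context: $\Lambda^*=\operatorname{Hom}_k(\Lambda,k)$ is a $\Lambda$-$\Lambda$-bimodule via $(a\varphi)(b)=\varphi(ba)$, $(\varphi a)(b)=\varphi(ab)$. The trivial extension ${\bf T}(\Lambda)$ is $\Lambda\oplus\Lambda^*$ with multiplication $(a,\varphi)(b,\psi)=(ab,a\psi+\varphi b)$. For an algebra $A$, $K(A)$ is the $k$-span of all commutators $xy-yx$. $[\Lambda,\Lambda^*]$ is the $k$-span of all $a\varphi-\varphi a$ with $a\in\Lambda$, $\varphi\in\Lambda^*$. $Z(\Lambda)$ is the center, and $\operatorname{Ann}_{\Lambda^*}(V)=\{\varphi\in\Lambda^*:\varphi(V)=0\}$ for $V\subseteq\Lambda$. *)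

(* Defs.v *)
From HB Require Import structures.
From mathcomp Require Import all_boot all_order all_algebra all_field.
Set Implicit Arguments. Unset Strict Implicit. Unset Printing Implicit Defensive.
Import GRing.Theory.
Local Open Scope ring_scope.

Definition in_span (F : nzRingType) (V : lmodType F) (S : V -> Prop) (v : V) : Prop :=
  exists n (c : 'I_n -> F) (s : 'I_n -> V),
    (forall i, S (s i)) /\ v = \sum_(i < n) c i *: s i.

Definition commK (F : nzRingType) (V : lmodType F) (mul : V -> V -> V) (v : V) : Prop :=
  in_span (fun w => exists x y, w = mul x y - mul y x) v.

Section TrivExt.
Variables (k : fieldType) (L : falgType k).

Definition dual := 'Hom(L, k^o).

Definition lact (a : L) (phi : dual) : dual := linfun (fun b : L => phi (b * a)).
Definition ract (phi : dual) (a : L) : dual := linfun (fun b : L => phi (a * b)).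

Definition TE := (L * dual)%type.
Definition tmul (x y : TE) : TE :=
  (x.1 * y.1, lact x.1 y.2 + ract x.2 y.1).

Definition KL (a : L) : Prop := commK (fun x y : L => x * y) a.
Definition KT (x : TE) : Prop := commK tmul x.
Definition brLD (phi : dual) : Prop :=
  in_span (fun psi => exists (a : L) (f : dual), psi = lact a f - ract f a) phi.

Definition in_center (z : L) : Prop := forall y : L, z * y = y * z.

Definition symmetrizing_form (B : L -> L -> k) : Prop :=
  [/\ (forall (c : k) x y z, B (c *: x + y) z = c * B x z + B y z),
      (forall (c : k) x y z, B x (c *: y + z) = c * B x y + B x z),
      (forall x y z, B (x * y) z = B x (y * z)),
      (forall x y, B x y = B y x) &
      (forall x, (forall y, B x y = 0) -> x = 0)].

Definition phi_comm (B : L -> L -> k) (a b : L) : dual :=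
  linfun (fun x : L => (B x (a * b - b * a) : k^o)).
End TrivExt.

(* Main.v *)
From Stdlib Require Import Classical.
Require Import Defs.
From HB Require Import structures.
From mathcomp Require Import all_boot all_order all_algebra all_field.
Import GRing.Theory.
Local Open Scope ring_scope.
Set Implicit Arguments. Unset Strict Implicit.

Section Span.
Variables (F : nzRingType) (V : lmodType F) (S : V -> Prop).

Lemma span0 : in_span S 0.
Proof. exists 0%N, (fun _ => 0), (fun _ => 0); split; first by case.
by rewrite big_ord0. Qed.

Lemma span_gen v : S v -> in_span S v.
Proof. move=> Sv; exists 1%N, (fun _ => 1), (fun _ => v); split => //.
by rewrite big_ord1 scale1r. Qed.

Lemma spanD u v : in_span S u -> in_span S v -> in_span S (u + v).
Proof.
move=> [n [c [s [Ss ->]]]] [m [d [t [St ->]]]].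
exists (n + m)%N, (fun i => match split i with inl j => c j | inr j => d j end),
  (fun i => match split i with inl j => s j | inr j => t j end); split.
  by move=> i; case: (split i).
by rewrite big_split_ord /=; congr (_ + _); apply: eq_bigr => i _;
  rewrite ?(unsplitK (inl _)) ?(unsplitK (inr _)).
Qed.

Lemma spanZ a v : in_span S v -> in_span S (a *: v).
Proof.
move=> [n [c [s [Ss ->]]]]; exists n, (fun i => a * c i), s; split => //.
by rewrite scaler_sumr; apply: eq_bigr => i _; rewrite scalerA.
Qed.

Lemma span_ind (P : V -> Prop) : P 0 -> (forall u v, P u -> P v -> P (u + v)) ->
  (forall a v, P v -> P (a *: v)) -> (forall v, S v -> P v) ->
  forall v, in_span S v -> P v.
Proof.
move=> P0 PD PZ PS v [n [c [s [Ss ->]]]].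
by apply: (big_ind P) => // i _; apply: PZ; apply: PS.
Qed.

Lemma span_sum n (c : 'I_n -> F) (s : 'I_n -> V) :
  (forall i, in_span S (s i)) -> in_span S (\sum_(i < n) c i *: s i).
Proof.
move=> H; apply: (big_ind (in_span S)) => //; [exact: span0|exact: spanD|].
by move=> i _; apply: spanZ.
Qed.
End Span.

Section Main.
Variables (k : fieldType) (L : falgType k).

Lemma linfunE' (aT rT : vectType k) (f : aT -> rT) : linear f ->
  forall x, linfun f x = f x.
Proof.
move=> lf x.
pose G : {linear aT -> rT} := HB.pack f (GRing.isLinear.Build _ _ _ _ f lf).
exact: (lfunE G x).
Qed.

Lemma lactE a (f : dual L) x : lact a f x = f (x * a).
Proof. rewrite /lact linfunE' // => c u v; by rewrite mulrDl -scalerAl linearP. Qed.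

Lemma ractE a (f : dual L) x : ract f a x = f (a * x).
Proof. rewrite /ract linfunE' // => c u v; by rewrite mulrDr -scalerAr linearP. Qed.


Lemma lact0 (a : L) : lact a (0 : dual L) = 0.
Proof. by apply/lfunP => x; rewrite lactE !zero_lfunE. Qed.
Lemma act0l (f : dual L) : lact 0 f = 0.
Proof. by apply/lfunP => x; rewrite lactE mulr0 linear0 zero_lfunE. Qed.
Lemma ract0 (a : L) : ract (0 : dual L) a = 0.
Proof. by apply/lfunP => x; rewrite ractE !zero_lfunE. Qed.
Lemma ract0r (f : dual L) : ract f 0 = 0.
Proof. by apply/lfunP => x; rewrite ractE mul0r linear0 zero_lfunE. Qed.

Lemma pairB (u1 u2 : L) (v1 v2 : dual L) :
  (u1, v1) - (u2, v2) = (u1 - u2, v1 - v2) :> TE L.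
Proof. by []. Qed.

Lemma part1 (a : L) (phi : dual L) : KT (a, phi) <-> KL a /\ brLD phi.
Proof.
split.
  move=> H; pose P := fun x : TE L => KL x.1 /\ brLD x.2.
  apply: (span_ind (P := P) _ _ _ _ H); rewrite /P.
  - by split; apply: span0.
  - by move=> u v [? ?] [? ?]; split; apply: spanD.
  - by move=> c v [? ?]; split; apply: spanZ.
  move=> v [[x fx] [[y fy] ->]] /=; split.
    by apply: span_gen; exists x, y.
  have -> : lact x fy + ract fx y - (lact y fx + ract fy x) =
     (lact x fy - ract fy x) - (lact y fx - ract fx y).
    by rewrite opprD opprB [- lact y fx - _]addrC addrACA.
  apply: spanD; last rewrite -scaleN1r; [|apply: spanZ]; apply: span_gen; eexists; eexists; reflexivity.
move=> [Ka Bphi].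
have -> : (a, phi) = (a, 0) + (0, phi) :> TE L by change ((a,phi) = (a + 0, 0 + phi)); rewrite addr0 add0r.
apply: spanD.
  pose P := fun a : L => KT (a, 0).
  apply: (span_ind (P := P) _ _ _ _ Ka); rewrite /P.
  - exact: span0.
  - move=> u v Hu Hv; have -> : (u + v, 0) = (u, 0) + (v, 0) :> TE L by change ((u + v, 0) = (u + v, 0 + 0) :> TE L); rewrite addr0.
    exact: spanD.
  - move=> c v Hv; have -> : (c *: v, 0) = c *: (v, 0) :> TE L by change ((c *: v, 0) = (c *: v, c *: 0) :> TE L); rewrite scaler0.
    exact: spanZ.
  move=> v [x [y ->]]; apply: span_gen; exists (x, 0), (y, 0).
  by rewrite /tmul /= pairB !lact0 !ract0 addr0 subrr.
pose P := fun phi : dual L => KT (0, phi).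
apply: (span_ind (P := P) _ _ _ _ Bphi); rewrite /P.
- exact: span0.
- move=> u v Hu Hv; have -> : (0, u + v) = (0, u) + (0, v) :> TE L by change ((0, u + v) = (0 + 0, u + v) :> TE L); rewrite addr0.
  exact: spanD.
- move=> c v Hv; have -> : (0, c *: v) = c *: (0, v) :> TE L by change ((0, c *: v) = (c *: 0, c *: v) :> TE L); rewrite scaler0.
  exact: spanZ.
move=> v [x [f ->]]; apply: span_gen; exists (x, 0), (0, f).
rewrite /tmul /= pairB; congr pair; first by rewrite mulr0 mul0r subrr.
by rewrite act0l ract0r add0r addr0.
Qed.

Section Sym.
Variable B : L -> L -> k.

Lemma lin1 : symmetrizing_form B -> forall z, linear (fun x => (B x z : k^o)).
Proof. by case=> H1 _ _ _ _ z c x y; rewrite H1. Qed.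
Lemma lin2 : symmetrizing_form B -> forall x, linear (fun z => (B x z : k^o)).
Proof. by case=> _ H2 _ _ _ x c y z; rewrite H2. Qed.

Lemma BBl (HB : symmetrizing_form B) z x y : B (x - y) z = B x z - B y z.
Proof.
pose G : {linear L -> k^o} := HB.pack (fun x => (B x z : k^o)) (GRing.isLinear.Build _ _ _ _ _ (lin1 HB z)).
exact: (raddfB G x y).
Qed.
Lemma BBr (HB : symmetrizing_form B) x y z : B x (y - z) = B x y - B x z.
Proof.
pose G : {linear L -> k^o} := HB.pack (fun z => (B x z : k^o)) (GRing.isLinear.Build _ _ _ _ _ (lin2 HB x)).
exact: (raddfB G y z).
Qed.
Lemma B0l (HB : symmetrizing_form B) z : B 0 z = 0.
Proof. by rewrite -(subrr z) BBl // subrr. Qed.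
Lemma BsumZl (HB : symmetrizing_form B) z n (c : 'I_n -> k) (s : 'I_n -> L) :
  B (\sum_(i < n) c i *: s i) z = \sum_(i < n) c i * B (s i) z.
Proof.
pose G : {linear L -> k^o} := HB.pack (fun x => (B x z : k^o)) (GRing.isLinear.Build _ _ _ _ _ (lin1 HB z)).
have := linear_sum G (index_enum 'I_n) xpredT (fun i => c i *: s i).
rewrite /= => ->; apply: eq_bigr => i _.
by case: (HB) => H1 _ _ _ _; rewrite -[c i *: s i]addr0 H1 B0l // addr0.
Qed.

Definition Bf (z : L) : dual L := linfun (fun x => (B x z : k^o)).
Lemma BfE (HB : symmetrizing_form B) z x : Bf z x = B x z.
Proof. by rewrite /Bf linfunE' //; exact: lin1. Qed.

Lemma Bf_lin (HB : symmetrizing_form B) : linear Bf.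
Proof.
move=> c u v; apply/lfunP => x.
by rewrite add_lfunE scale_lfunE !BfE //; case: HB => _ H2 _ _ _; rewrite H2.
Qed.

Lemma Bf_surj (HB : symmetrizing_form B) (phi : dual L) : exists c, phi = Bf c.
Proof.
pose G := linfun Bf.
have GE c : G c = Bf c by rewrite linfunE' //; exact: Bf_lin.
have kG : lker G == 0%VS.
  apply/lker0P => u v; rewrite !GE => e.
  apply/eqP; rewrite -subr_eq0; apply/eqP.
  case: (HB) => _ _ _ Hs Hn; apply: Hn => y; rewrite Hs -BfE // -/(Bf _).
  have -> : Bf (u - v) = Bf u - Bf v.
    by apply/lfunP => x; rewrite add_lfunE opp_lfunE !BfE // BBr.
  by rewrite e subrr zero_lfunE.
have iG : (limg G = fullv)%VS.
  apply/eqP; rewrite eqEdim subvf /= limg_dim_eq ?(eqP kG) ?capv0 //.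
  rewrite !dimvf /=.
  have -> : dim (dual L) = (dim L * 1)%N := erefl. by rewrite muln1.
have : phi \in limg G by rewrite iG memvf.
by case/memv_imgP => c _ ->; exists c; rewrite GE.
Qed.

Lemma comm_gen (HB : symmetrizing_form B) a c :
  lact a (Bf c) - ract (Bf c) a = phi_comm B a c.
Proof.
apply/lfunP => x; rewrite add_lfunE opp_lfunE lactE ractE !BfE // /phi_comm.
by case: (HB) => _ _ Ha Hs _; rewrite BBr // Ha; congr (_ - _); rewrite Hs -Ha Hs.
Qed.


Lemma part2a (HB : symmetrizing_form B) (phi : dual L) :
  brLD phi <-> in_span (fun psi => exists a b : L, psi = phi_comm B a b) phi.
Proof.
split=> H.
  apply: (span_ind _ _ _ _ H).
  - exact: span0.
  - by move=> u v; apply: spanD.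
  - by move=> c v; apply: spanZ.
  move=> v [a [f ->]]; have [c ->] := Bf_surj HB f.
  by apply: span_gen; exists a, c; rewrite comm_gen.
apply: (span_ind _ _ _ _ H).
- exact: span0.
- by move=> u v; apply: spanD.
- by move=> c v; apply: spanZ.
move=> v [a [b ->]]; rewrite -comm_gen //; apply: span_gen; by exists a, (Bf b).
Qed.

Lemma comm_expand (x y : L) :
  x * y - y * x = \sum_(i < \dim (fullv : {vspace L}))
     coord (vbasis fullv) i x *: ((vbasis fullv)`_i * y - y * (vbasis fullv)`_i).
Proof.
have ex := coord_vbasis (memvf x).
have -> : x * y - y * x = (\sum_(i < \dim (fullv : {vspace L})) coord (vbasis fullv) i x *: (vbasis fullv)`_i) * y
   - y * (\sum_(i < \dim (fullv : {vspace L})) coord (vbasis fullv) i x *: (vbasis fullv)`_i) by rewrite -ex.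
rewrite mulr_suml mulr_sumr -sumrB; apply: eq_bigr => i _.
by rewrite -scalerAl -scalerAr scalerBr.
Qed.

Lemma part2b (HB : symmetrizing_form B) (phi : dual L) :
  brLD phi <-> (forall z : L, in_center z -> phi z = 0).
Proof.
split=> H.
  apply: (span_ind (P := fun phi : dual L => forall z : L, in_center z -> phi z = 0) _ _ _ _ H).
  - by move=> z _; rewrite zero_lfunE.
  - by move=> u v Hu Hv z Hz; rewrite add_lfunE Hu // Hv // addr0.
  - by move=> c v Hv z Hz; rewrite scale_lfunE Hv // scaler0.
  move=> v [a [f ->]] z Hz.
  by rewrite add_lfunE opp_lfunE lactE ractE Hz subrr.
move: H; have [c ->] := Bf_surj HB phi; move=> H.
pose vb := vbasis (fullv : {vspace L}).
pose s := [seq x * y - y * x | x <- (vb : seq L), y <- (vb : seq L)].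
pose Kvs := (<<s>>)%VS.
have vbin (i : 'I_(\dim (fullv : {vspace L}))) : vb`_i \in (vb : seq L).
  by apply: mem_nth; rewrite size_tuple.
have commK x y : x * y - y * x \in Kvs.
  rewrite comm_expand; apply: rpred_sum => i _; apply: rpredZ.
  rewrite -opprB comm_expand rpredN; apply: rpred_sum => j _; apply: rpredZ.
  by apply: memv_span; rewrite /s; apply/allpairsP; exists (vb`_j, vb`_i); split; try exact: vbin.
case: (HB) => _ _ Ha Hs Hn.
have cK : c \in Kvs.
  case: (boolP (c \in Kvs)) => // cnK; exfalso.
  pose c' := c - projv Kvs c.
  have c'nz : c' != 0.
    apply: contra cnK; rewrite subr_eq0 => /eqP ->; exact: memv_proj.
  have [d Hd] : exists d, B c' d != 0.
    apply: Classical_Prop.NNPP => Hx; apply: (negP c'nz); apply/eqP; apply: Hn => y.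
    apply/eqP; apply/negPn/negP => Hy; apply: Hx; by exists y.
  pose f : dual L := (Bf d \o (\1 - projv Kvs))%VF.
  have fE x : f x = B (x - projv Kvs x) d.
    by rewrite comp_lfunE add_lfunE opp_lfunE id_lfunE BfE.
  have [z fz] := Bf_surj HB f.
  have key x y : B (x * y - y * x) z = B y (z * x - x * z).
    by rewrite BBl // BBr // !Ha [B x _]Hs Ha.
  have zc : in_center z.
    move=> x; apply/eqP; rewrite -subr_eq0; apply/eqP; apply: Hn => y; rewrite Hs.
    by rewrite -key -BfE // -fz fE projv_id // subrr B0l.
  have := H z zc; rewrite BfE // Hs -BfE // -fz fE -/c' => /eqP; exact/negP.
have [n [cs [ss [Hss ->]]]] : in_span (fun w => exists x y : L, w = x * y - y * x) c.
  exists (size s), (fun i => coord (in_tuple s) i c), (fun i => s`_i); split.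
    move=> i; have /allpairsP [[x y] [_ _ ->]] : s`_i \in s by apply: mem_nth.
    by exists x, y.
  exact: coord_span.
pose G : {linear L -> dual L} := HB.pack Bf (GRing.isLinear.Build _ _ _ _ _ (Bf_lin HB)).
have -> : Bf (\sum_(i < n) cs i *: ss i) = \sum_(i < n) cs i *: Bf (ss i).
  have := linear_sum G (index_enum 'I_n) xpredT (fun i => cs i *: ss i).
  rewrite /= => ->; apply: eq_bigr => i _; apply/lfunP => x.
  rewrite scale_lfunE !BfE //; case: (HB) => _ H2 _ _ _.
  have B0 : B x 0 = 0 by rewrite -(subrr (0:L)) BBr // subrr.
  by rewrite -[cs i *: ss i]addr0 H2 B0 addr0.
apply: span_sum => i; have [x [y ->]] := Hss i.
by apply: span_gen; exists x, (Bf y); rewrite comm_gen.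
Qed.

End Sym.
End Main.

Theorem lemma3p4 (k : fieldType) (L : falgType k) :
  (forall (a : L) (phi : dual L), KT (a, phi) <-> KL a /\ brLD phi) /\
  (forall B : L -> L -> k, symmetrizing_form B ->
     (forall phi : dual L,
        brLD phi <-> in_span (fun psi => exists a b : L, psi = phi_comm B a b) phi) /\
     (forall phi : dual L,
        brLD phi <-> (forall z : L, in_center z -> phi z = 0))).
Proof.
split; first exact: part1.
move=> B HB; split=> phi.
- exact (part2a HB phi).
- exact (part2b HB phi).
Qed.
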